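(* Let $\mu$ be a limit ordinal and let $\langle \mathcal B^\nu:\nu<\mu\rangle$ be a $\preceq$-increasing sequence of base-enumerations, $\mathcal B^\nu=\langle B^\nu_i:i<\xi^\nu\rangle$, generating topologies $\tau^\nu$ on sets $X^\nu$. Put $\xi^\mu=\sup_{\nu<\mu}\xi^\nu$ and, for $i<\xi^\mu$, $B^\mu_i=\bigcup\{B^\nu_i:\nu<\mu,\ i<\xi^\nu\}$. Then $\mathcal B^\mu=\langle B^\mu_i:i<\xi^\mu\rangle$ is a base-enumeration and $\mathcal B^\nu\preceq\mathcal B^\mu$ for each $\nu<\mu$. Moreover, if $\tau^\nu$ is Hausdorff for cofinally many $\nu<\mu$, then the topology $\tau^\mu$ generated by $\mathcal B^\mu$ is Hausdorff. Finally, if $\sigma<\mu$, $a\in X^\sigma$, $A\subseteq X^\sigma$ and $a\in\overline{A}^{\tau^\nu}$ for every $\nu$ with $\sigma<\nu<\mu$, then $a\in\overline{A}^{\tau^\mu}$.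
   Context: A base-enumeration is a sequence $\langle B_i:i<\xi\rangle$, for some ordinal $\xi$, such that $\{B_i:i<\xi\}$ is a base consisting of clopen sets for a (not necessarily Hausdorff) topology $\tau$ on some set $X$ (namely $X=\bigcup_i B_i$). For base-enumerations $\mathcal B^0=\langle B^0_i:i<\xi^0\rangle$ on $X^0$ and $\mathcal B^1=\langle B^1_i:i<\xi^1\rangle$ on $X^1$, write $\mathcal B^0\preceq\mathcal B^1$ iff (1) $X^0\subseteq X^1$ and $\xi^0\le\xi^1$; (2) $B^0_i=B^1_i\cap X^0$ for $i<\xi^0$; (3) for $i,j<\xi^0$, $B^0_i\subseteq B^0_j$ iff $B^1_i\subseteq B^1_j$; (4) for $i,j<\xi^0$, $B^0_i\cap B^0_j=\emptyset$ iff $B^1_i\cap B^1_j=\emptyset$. *)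

(* Defs.v *)
(* Sets are predicates T -> Prop. Ordinals are modelled as
   initial segments (downward-closed subsets) of an arbitrary well-ordered
   type of indices. *)
From Stdlib Require Import Classical.

Set Implicit Arguments.

Definition is_wellorder {A : Type} (lt : A -> A -> Prop) : Prop :=
  (forall x, ~ lt x x) /\
  (forall x y z, lt x y -> lt y z -> lt x z) /\
  (forall x y, lt x y \/ x = y \/ lt y x) /\
  well_founded lt.

Definition down_closed {A : Type} (lt : A -> A -> Prop) (xi : A -> Prop) : Prop :=
  forall i j, lt j i -> xi i -> xi j.

Definition is_limit {N : Type} (ltN : N -> N -> Prop) (mu : N) : Prop :=
  (exists nu, ltN nu mu) /\ (forall nu, ltN nu mu -> exists nu', ltN nu nu' /\ ltN nu' mu).

Definition carrier {I T : Type} (B : I -> T -> Prop) (xi : I -> Prop) : T -> Prop :=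
  fun x => exists i, xi i /\ B i x.

Definition is_topology {T : Type} (X : T -> Prop) (tau : (T -> Prop) -> Prop) : Prop :=
  (forall U, tau U -> forall x, U x -> X x) /\
  tau (fun _ => False) /\ tau X /\
  (forall F : (T -> Prop) -> Prop, (forall U, F U -> tau U) ->
     tau (fun x => exists U, F U /\ U x)) /\
  (forall U V, tau U -> tau V -> tau (fun x => U x /\ V x)).

Definition is_base_enum {I T : Type} (lt : I -> I -> Prop)
    (B : I -> T -> Prop) (xi : I -> Prop) : Prop :=
  down_closed lt xi /\
  exists tau, is_topology (carrier B xi) tau /\
    (forall i, xi i -> tau (B i) /\ tau (fun x => carrier B xi x /\ ~ B i x)) /\
    (forall U, tau U -> forall x, U x ->
        exists i, xi i /\ B i x /\ (forall y, B i y -> U y)).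

Definition gen_open {I T : Type} (B : I -> T -> Prop) (xi : I -> Prop)
    (U : T -> Prop) : Prop :=
  (forall x, U x -> carrier B xi x) /\
  (forall x, U x -> exists i, xi i /\ B i x /\ (forall y, B i y -> U y)).

Definition hausdorff {I T : Type} (B : I -> T -> Prop) (xi : I -> Prop) : Prop :=
  forall x y, carrier B xi x -> carrier B xi y -> x <> y ->
    exists U V, gen_open B xi U /\ gen_open B xi V /\ U x /\ V y /\
      (forall z, ~ (U z /\ V z)).

Definition in_closure {I T : Type} (B : I -> T -> Prop) (xi : I -> Prop)
    (A : T -> Prop) (a : T) : Prop :=
  carrier B xi a /\
  forall U, gen_open B xi U -> U a -> exists z, U z /\ A z.

Definition benum_le {I T : Type} (B0 : I -> T -> Prop) (xi0 : I -> Prop)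
    (B1 : I -> T -> Prop) (xi1 : I -> Prop) : Prop :=
  (forall x, carrier B0 xi0 x -> carrier B1 xi1 x) /\ (forall i, xi0 i -> xi1 i) /\
  (forall i, xi0 i -> forall x, B0 i x <-> (B1 i x /\ carrier B0 xi0 x)) /\
  (forall i j, xi0 i -> xi0 j ->
     ((forall x, B0 i x -> B0 j x) <-> (forall x, B1 i x -> B1 j x))) /\
  (forall i j, xi0 i -> xi0 j ->
     ((forall x, ~ (B0 i x /\ B0 j x)) <-> (forall x, ~ (B1 i x /\ B1 j x)))).

Definition lim_xi {N I : Type} (ltN : N -> N -> Prop) (mu : N)
    (xi : N -> I -> Prop) : I -> Prop :=
  fun i => exists nu, ltN nu mu /\ xi nu i.

Definition lim_B {N I T : Type} (ltN : N -> N -> Prop) (mu : N)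
    (B : N -> I -> T -> Prop) (xi : N -> I -> Prop) : I -> T -> Prop :=
  fun i x => exists nu, ltN nu mu /\ xi nu i /\ B nu i x.

(* Main.v *)
Require Import Defs.
From Stdlib Require Import Classical.
Set Implicit Arguments.

Definition leN {N : Type} (lt : N -> N -> Prop) (a b : N) := a = b \/ lt a b.

Section Aux.
Variables (N I T : Type) (ltN : N -> N -> Prop) (ltI : I -> I -> Prop)
  (mu : N) (B : N -> I -> T -> Prop) (xi : N -> I -> Prop).
Hypothesis HwN : is_wellorder ltN.
Hypothesis Hbe : forall nu, ltN nu mu -> is_base_enum ltI (B nu) (xi nu).
Hypothesis Hle : forall nu nu', ltN nu nu' -> ltN nu' mu ->
     benum_le (B nu) (xi nu) (B nu') (xi nu').

Lemma leN_trans a b c : leN ltN a b -> leN ltN b c -> leN ltN a c.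
Proof.
  destruct HwN as [_ [Htr _]].
  unfold leN; intros [->|H1] [->|H2]; auto. right; eauto.
Qed.

Lemma leN_lt a b c : ltN a b -> leN ltN b c -> ltN a c.
Proof.
  destruct HwN as [_ [Htr _]].
  unfold leN; intros H1 [->|H2]; eauto.
Qed.

Lemma max2 a b : exists m, leN ltN a m /\ leN ltN b m /\ (m = a \/ m = b).
Proof.
  destruct HwN as [_ [_ [Htri _]]].
  destruct (Htri a b) as [H|[H|H]].
  - exists b; unfold leN; auto.
  - subst; exists b; unfold leN; auto.
  - exists a; unfold leN; auto.
Qed.

Lemma max2' a b : ltN a mu -> ltN b mu ->
  exists m, ltN m mu /\ leN ltN a m /\ leN ltN b m.
Proof.
  intros Ha Hb; destruct (max2 a b) as [m [H1 [H2 [->| ->]]]]; eauto.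
Qed.

Lemma xi_mono a b i : leN ltN a b -> ltN b mu -> xi a i -> xi b i.
Proof.
  intros [->|H] Hb Hx; auto. apply (Hle H Hb); auto.
Qed.

Lemma B_mono a b i x : leN ltN a b -> ltN b mu -> xi a i -> B a i x -> B b i x.
Proof.
  intros [->|H] Hb Hx Hx'; auto. destruct (Hle H Hb) as [_ [_ [H3 _]]].
  apply (H3 i Hx x); auto.
Qed.

Lemma carrier_mono a b x : leN ltN a b -> ltN b mu ->
  carrier (B a) (xi a) x -> carrier (B b) (xi b) x.
Proof.
  intros [->|H] Hb Hx; auto. apply (Hle H Hb); auto.
Qed.

Lemma B_down a b i x : leN ltN a b -> ltN b mu -> xi a i -> B b i x ->
  carrier (B a) (xi a) x -> B a i x.
Proof.
  intros [->|H] Hb Hx Hx' Hc; auto. destruct (Hle H Hb) as [_ [_ [H3 _]]].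
  apply (H3 i Hx x); auto.
Qed.

Lemma sub_up a b i j : leN ltN a b -> ltN b mu -> xi a i -> xi a j ->
  (forall x, B a i x -> B a j x) -> forall x, B b i x -> B b j x.
Proof.
  intros [->|H] Hb Hi Hj Hs; auto. destruct (Hle H Hb) as [_ [_ [_ [H4 _]]]].
  apply (H4 i j Hi Hj); auto.
Qed.

Lemma disj_up a b i j : leN ltN a b -> ltN b mu -> xi a i -> xi a j ->
  (forall x, ~ (B a i x /\ B a j x)) -> forall x, ~ (B b i x /\ B b j x).
Proof.
  intros [->|H] Hb Hi Hj Hs; auto. destruct (Hle H Hb) as [_ [_ [_ [_ H5]]]].
  apply (H5 i j Hi Hj); auto.
Qed.

Notation BM := (lim_B ltN mu B xi).
Notation XM := (lim_xi ltN mu xi).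

Lemma BM_at nu i x : ltN nu mu -> xi nu i -> B nu i x -> BM i x.
Proof. intros; exists nu; auto. Qed.

Lemma BM_down nu i x : ltN nu mu -> xi nu i -> BM i x ->
  carrier (B nu) (xi nu) x -> B nu i x.
Proof.
  intros Hn Hi [nu1 [H1 [H2 H3]]] Hc.
  destruct (max2' Hn H1) as [m [Hm [L1 L2]]].
  apply (B_down L1 Hm Hi); auto.
  apply (B_mono L2 Hm H2 H3).
Qed.

Lemma BM_sub nu i j : ltN nu mu -> xi nu i -> xi nu j ->
  (forall x, B nu i x -> B nu j x) -> forall x, BM i x -> BM j x.
Proof.
  intros Hn Hi Hj Hs x [nu1 [H1 [H2 H3]]].
  destruct (max2' Hn H1) as [m [Hm [L1 L2]]].
  exists m; split; auto; split.
  - apply (xi_mono L1 Hm Hj).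
  - apply (sub_up L1 Hm Hi Hj Hs). apply (B_mono L2 Hm H2 H3).
Qed.

Lemma BM_disj nu i j : ltN nu mu -> xi nu i -> xi nu j ->
  (forall x, ~ (B nu i x /\ B nu j x)) -> forall x, ~ (BM i x /\ BM j x).
Proof.
  intros Hn Hi Hj Hs x [[nu1 [H1 [H2 H3]]] [nu2 [H1' [H2' H3']]]].
  destruct (max2' Hn H1) as [m0 [Hm0 [L1 L2]]].
  destruct (max2' Hm0 H1') as [m [Hm [L3 L4]]].
  apply (disj_up (leN_trans L1 L3) Hm Hi Hj Hs (x:=x)); split.
  - apply (B_mono (leN_trans L2 L3) Hm H2 H3).
  - apply (B_mono L4 Hm H2' H3').
Qed.

Lemma BM_carrier i x : BM i x -> carrier BM XM x.
Proof.
  intros H; exists i; split; auto. destruct H as [nu [? [? ?]]]; exists nu; auto.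
Qed.

Lemma carrier_M_inv x : carrier BM XM x ->
  exists nu, ltN nu mu /\ carrier (B nu) (xi nu) x.
Proof.
  intros [i [_ [nu [H1 [H2 H3]]]]]. exists nu; split; auto. exists i; auto.
Qed.

Lemma gen_open_BM i : gen_open BM XM (BM i).
Proof.
  split.
  - intros x H; apply (BM_carrier H).
  - intros x H; exists i; split; [|split; auto].
    destruct H as [nu [? [? ?]]]; exists nu; auto.
Qed.

Lemma base_nu nu i j x : ltN nu mu -> xi nu i -> xi nu j -> B nu i x -> B nu j x ->
  exists k, xi nu k /\ B nu k x /\ forall y, B nu k y -> B nu i y /\ B nu j y.
Proof.
  intros Hn Hi Hj Hx1 Hx2.
  destruct (Hbe Hn) as [_ [tau [[_ [_ [_ [_ Hint]]]] [Hcl Hbase]]]].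
  apply (Hbase _ (Hint _ _ (proj1 (Hcl i Hi)) (proj1 (Hcl j Hj)))); auto.
Qed.

Lemma compl_nu nu i x : ltN nu mu -> xi nu i -> carrier (B nu) (xi nu) x -> ~ B nu i x ->
  exists k, xi nu k /\ B nu k x /\ forall y, B nu k y -> ~ B nu i y.
Proof.
  intros Hn Hi Hc Hx.
  destruct (Hbe Hn) as [_ [tau [_ [Hcl Hbase]]]].
  destruct (Hbase _ (proj2 (Hcl i Hi)) x) as [k [Hk [Hk1 Hk2]]]; auto.
  exists k; split; auto; split; auto. intros y Hy; apply (Hk2 y Hy).
Qed.

Lemma part2 nu : ltN nu mu -> benum_le (B nu) (xi nu) BM XM.
Proof.
  intros Hn. split; [|split; [|split; [|split]]].
  - intros x [j [Hj Hx]]. exists j; split. exists nu; auto. apply (BM_at Hn Hj Hx).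
  - intros i Hi; exists nu; auto.
  - intros i Hi x; split.
    + intros Hx; split. apply (BM_at Hn Hi Hx). exists i; auto.
    + intros [H1 H2]; apply (BM_down Hn Hi H1 H2).
  - intros i j Hi Hj; split.
    + apply BM_sub; auto.
    + intros Hs x Hx. apply (BM_down Hn Hj). apply Hs. apply (BM_at Hn Hi Hx).
      exists i; auto.
  - intros i j Hi Hj; split.
    + apply BM_disj; auto.
    + intros Hs x [H1 H2]. apply (Hs x); split; [apply (BM_at Hn Hi H1)|apply (BM_at Hn Hj H2)].
Qed.

Lemma part1 : is_base_enum ltI BM XM.
Proof.
  split.
  { intros i j Hji [nu [Hn Hi]]. exists nu; split; auto.
    destruct (Hbe Hn) as [Hd _]. apply (Hd i j); auto. }
  exists (gen_open BM XM). split; [|split].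
  - split; [|split; [|split; [|split]]].
    + intros U [H _]; auto.
    + split; intros x [].
    + split; auto. intros x [i [Hi Hx]]. exists i; split; auto; split; auto.
      intros y Hy; apply (BM_carrier Hy).
    + intros F HF; split.
      * intros x [U [HU Hx]]. apply (proj1 (HF U HU) x Hx).
      * intros x [U [HU Hx]]. destruct (proj2 (HF U HU) x Hx) as [i [Hi [Hx' Hs]]].
        exists i; split; auto; split; auto. intros y Hy; exists U; auto.
    + intros U V [HU1 HU2] [HV1 HV2]; split.
      * intros x [Hx _]; auto.
      * intros x [HxU HxV].
        destruct (HU2 x HxU) as [i [_ [Hix HiU]]].
        destruct (HV2 x HxV) as [j [_ [Hjx HjV]]].
        destruct Hix as [nu1 [H1 [H2 H3]]].
        destruct Hjx as [nu2 [H1' [H2' H3']]].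
        destruct (max2' H1 H1') as [m [Hm [L1 L2]]].
        assert (Xi : xi m i) by apply (xi_mono L1 Hm H2).
        assert (Xj : xi m j) by apply (xi_mono L2 Hm H2').
        destruct (base_nu Hm Xi Xj (B_mono L1 Hm H2 H3) (B_mono L2 Hm H2' H3'))
          as [k [Hk [Hkx Hks]]].
        exists k; split. exists m; auto. split. apply (BM_at Hm Hk Hkx).
        intros y Hy; split.
        -- apply HiU. apply (BM_sub Hm Hk Xi (fun y h => proj1 (Hks y h)) Hy).
        -- apply HjV. apply (BM_sub Hm Hk Xj (fun y h => proj2 (Hks y h)) Hy).
  - intros i Hi; split; [apply gen_open_BM|].
    split.
    + intros x [Hx _]; auto.
    + intros x [Hx Hnx].
      destruct Hi as [nu0 [H0 H0i]].
      destruct Hx as [j [_ [nu1 [H1 [H2 H3]]]]].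
      destruct (max2' H0 H1) as [m [Hm [L1 L2]]].
      assert (Xi : xi m i) by apply (xi_mono L1 Hm H0i).
      assert (Xj : xi m j) by apply (xi_mono L2 Hm H2).
      assert (Hc : carrier (B m) (xi m) x).
      { exists j; split; auto. apply (B_mono L2 Hm H2 H3). }
      assert (Hn : ~ B m i x) by (intro Hb; apply Hnx; apply (BM_at Hm Xi Hb)).
      destruct (compl_nu Hm Xi Hc Hn) as [k [Hk [Hkx Hks]]].
      exists k; split. exists m; auto. split. apply (BM_at Hm Hk Hkx).
      intros y Hy; split. apply (BM_carrier Hy).
      intros Hiy. apply (BM_disj Hm Hk Xi (fun z h => Hks z (proj1 h) (proj2 h)) (x:=y)).
      auto.
  - intros U [_ HU] x Hx; apply HU; auto.
Qed.

Lemma part3 : (forall nu, ltN nu mu ->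
      exists nu', (nu' = nu \/ ltN nu nu') /\ ltN nu' mu /\ hausdorff (B nu') (xi nu')) ->
   hausdorff BM XM.
Proof.
  intros Hh x y Hx Hy Hxy.
  destruct (carrier_M_inv Hx) as [nu1 [H1 C1]].
  destruct (carrier_M_inv Hy) as [nu2 [H2 C2]].
  destruct (max2' H1 H2) as [m [Hm [L1 L2]]].
  destruct (Hh m Hm) as [n [Ln [Hn Hhn]]].
  assert (Ln' : leN ltN m n) by (destruct Ln; [left; auto | right; auto]).
  destruct (Hhn x y (carrier_mono (leN_trans L1 Ln') Hn C1)
                    (carrier_mono (leN_trans L2 Ln') Hn C2) Hxy)
    as [U [V [[_ HU] [[_ HV] [Ux [Vy Hd]]]]]].
  destruct (HU x Ux) as [k [Hk [Hkx HkU]]].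
  destruct (HV y Vy) as [l [Hl [Hly HlV]]].
  exists (BM k), (BM l). split; [apply gen_open_BM|]. split; [apply gen_open_BM|].
  split. apply (BM_at Hn Hk Hkx). split. apply (BM_at Hn Hl Hly).
  apply (BM_disj Hn Hk Hl). intros z [Z1 Z2]. apply (Hd z); auto.
Qed.

Lemma part4 : is_limit ltN mu -> forall (sigma : N) (a : T) (A : T -> Prop),
     ltN sigma mu -> carrier (B sigma) (xi sigma) a ->
     (forall nu, ltN sigma nu -> ltN nu mu -> in_closure (B nu) (xi nu) A a) ->
     in_closure BM XM A a.
Proof.
  intros [_ Hlim] sigma a A Hs Ha Hcl.
  split. apply (part2 Hs); auto.
  intros U [_ HU] Ua.
  destruct (HU a Ua) as [i [[nu1 [H1 H1i]] [Hia HiU]]].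
  destruct (Hlim sigma Hs) as [n' [Hsn' Hn']].
  destruct (max2' Hn' H1) as [m [Hm [L1 L2]]].
  assert (Hsm : ltN sigma m) by apply (leN_lt Hsn' L1).
  assert (Xi : xi m i) by apply (xi_mono L2 Hm H1i).
  destruct (Hcl m Hsm Hm) as [_ Hc].
  destruct (Hc (B m i)) as [z [Hz Az]].
  - split. intros x Hx; exists i; auto.
    intros x Hx; exists i; auto.
  - apply (BM_down Hm Xi Hia). apply (carrier_mono (or_intror Hsm) Hm Ha).
  - exists z; split; auto. apply HiU. apply (BM_at Hm Xi Hz).
Qed.

End Aux.

Theorem lemma2p2 (N I T : Type) (ltN : N -> N -> Prop) (ltI : I -> I -> Prop)
  (mu : N) (B : N -> I -> T -> Prop) (xi : N -> I -> Prop) :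
  is_wellorder ltN -> is_wellorder ltI -> is_limit ltN mu ->
  (forall nu, ltN nu mu -> is_base_enum ltI (B nu) (xi nu)) ->
  (forall nu nu', ltN nu nu' -> ltN nu' mu ->
     benum_le (B nu) (xi nu) (B nu') (xi nu')) ->
  is_base_enum ltI (lim_B ltN mu B xi) (lim_xi ltN mu xi) /\
  (forall nu, ltN nu mu ->
     benum_le (B nu) (xi nu) (lim_B ltN mu B xi) (lim_xi ltN mu xi)) /\
  ((forall nu, ltN nu mu ->
      exists nu', (nu' = nu \/ ltN nu nu') /\ ltN nu' mu /\ hausdorff (B nu') (xi nu')) ->
   hausdorff (lim_B ltN mu B xi) (lim_xi ltN mu xi)) /\
  (forall (sigma : N) (a : T) (A : T -> Prop),
     ltN sigma mu -> carrier (B sigma) (xi sigma) a ->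
     (forall x, A x -> carrier (B sigma) (xi sigma) x) ->
     (forall nu, ltN sigma nu -> ltN nu mu -> in_closure (B nu) (xi nu) A a) ->
     in_closure (lim_B ltN mu B xi) (lim_xi ltN mu xi) A a).
Proof.
  intros HwN HwI Hlim Hbe Hle.
  split; [apply part1; auto|].
  split; [intros; apply part2; auto|].
  split; [apply part3; auto|].
  intros sigma a A Hs Ha _ Hc. eapply part4; eauto.
Qed.
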